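(* Under assumptions (A1)–(A6) below, for (almost) every $x$ in the support of $X$, $$\psi(x) = \Big[1-\frac{\mu_{10}(x)}{\mu_{11}(x)}\Big]\Big[1-\frac{\gamma_0(x)}{\gamma_1(x)}\Big],$$ $$\delta(x) = \Big[1-\frac{\mu_{00}(x)}{\mu_{11}(x)}\Big]\Big[1-\frac{\gamma_0(x)}{\gamma_1(x)}\Big] + \Big[1-\frac{\mu_{01}(x)}{\mu_{11}(x)}\Big]\frac{\gamma_0(x)}{\gamma_1(x)},$$ and $\zeta(x)=\delta(x)-\psi(x)$.
   Context: Observed data $O=(X,A,M,Y)$ with covariates $X\in\mathbb{R}^d$, binary exposure $A$, binary mediator $M$, binary outcome $Y$. For $a,m\in\{0,1\}$, $Y(a,m)$ denotes the potential outcome under $A=a,M=m$, $M(a)$ the potential mediator under $A=a$, and $Y(a):=Y(a,M(a))$; cross-world quantities $Y(a,M(a'))$ are defined by substitution. All are defined on a common probability space with $O$. Let $\mu_{am}(x)=P(Y=1\mid A=a,M=m,X=x)$ and $\gamma_a(x)=P(M=1\mid A=a,X=x)$. Estimands: $\delta(x)=P(Y(0)=0\mid Y(1)=1,M(1)=1,X=x)$ (total mediated probability of causation); $\psi(x)=P(Y(1,M(0))=0,\,Y(0,M(0))=0\mid Y(1,M(1))=1,M(1)=1,X=x)$ (probability of indirect causation); $\zeta(x)=P(Y(1,M(0))=1,\,Y(0,M(0))=0\mid Y(1,M(1))=1,M(1)=1,X=x)$ (probability of direct causation). Assumptions: (A1) consistency: for all $a,m$, $A=a,M=m\Rightarrow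 Y=Y(a,m)$ and $A=a\Rightarrow M=M(a)$. (A2) monotonicity: $Y(1,1)\ge Y(1,0)\ge Y(0,0)$, $Y(1,1)\ge Y(0,1)$, $M(1)\ge M(0)$. (A3) $A\perp\{Y(1,1),Y(1,0),Y(0,1),Y(0,0),M(1),M(0)\}\mid X$. (A4) cross-world ignorability: $\{Y(1,1),Y(1,0),Y(0,1),Y(0,0)\}\perp\{M(1),M(0)\}\mid X$. (A5) there is $\epsilon>0$ with $P\{\min_{a,m}P(A=a,M=m\mid X)\ge\epsilon\}=1$. (A6) $P\{P(Y=1\mid A=1,M=1,X)\ge\epsilon\}=1$. *)

(* Defs.v *)
From HB Require Import structures.
From mathcomp Require Import all_boot all_order all_algebra.
From mathcomp Require Import all_classical all_reals all_analysis.
Set Implicit Arguments. Unset Strict Implicit. Unset Printing Implicit Defensive.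
Import Order.TTheory GRing.Theory Num.Theory.
Local Open Scope ring_scope.

(* A configuration of all the binary variables of one unit:
   (A, M, Y, (M(0), M(1)), ((Y(0,0), Y(0,1)), (Y(1,0), Y(1,1)))). *)
Definition potT := ((bool * bool) * ((bool * bool) * (bool * bool)))%type.
Definition cfgT := (bool * bool * bool * potT)%type.

Definition cA (u : cfgT) : bool := u.1.1.1.
Definition cM (u : cfgT) : bool := u.1.1.2.
Definition cY (u : cfgT) : bool := u.1.2.
Definition cPot (u : cfgT) : potT := u.2.
Definition cMpot (u : cfgT) : bool * bool := u.2.1.
Definition cYpot (u : cfgT) : (bool * bool) * (bool * bool) := u.2.2.
Definition cMp (u : cfgT) (a : bool) : bool :=
  if a then u.2.1.2 else u.2.1.1.
Definition cYp (u : cfgT) (a m : bool) : bool :=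
  if a then (if m then u.2.2.2.2 else u.2.2.2.1)
       else (if m then u.2.2.1.2 else u.2.2.1.1).

Definition mkcfg {Omega : Type} (A M Y : Omega -> bool) (Mp : bool -> Omega -> bool)
  (Yp : bool -> bool -> Omega -> bool) (w : Omega) : cfgT :=
  (A w, M w, Y w,
   ((Mp false w, Mp true w),
    ((Yp false false w, Yp false true w), (Yp true false w, Yp true true w)))).

Section KernelProb.
Variable R : realType.
(* k : a (conditional) probability mass function on configurations,
   here the conditional law given X = x. *)
Variable k : cfgT -> R.

Definition Kp (E : pred cfgT) : R := \sum_(u : cfgT | E u) k u.
Definition Kc (E F : pred cfgT) : R := Kp (fun u => E u && F u) / Kp F.

Definition mu (a m : bool) : R := Kc cY (fun u => (cA u == a) && (cM u == m)).
Definition gamma (a : bool) : R := Kc cM (fun u => cA u == a).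

Definition condE (u : cfgT) : bool := cYp u true (cMp u true) && cMp u true.

(* delta(x) = P(Y(0)=0 | Y(1)=1, M(1)=1, X=x), Y(a) = Y(a,M(a)) *)
Definition delta : R := Kc (fun u => ~~ cYp u false (cMp u false)) condE.
Definition psi : R :=
  Kc (fun u => ~~ cYp u true (cMp u false) && ~~ cYp u false (cMp u false)) condE.
Definition zeta : R :=
  Kc (fun u => cYp u true (cMp u false) && ~~ cYp u false (cMp u false)) condE.

Definition indep_A_pot : Prop :=
  forall (a : bool) (w : potT),
    Kp (fun u => (cA u == a) && (cPot u == w)) =
    Kp (fun u => cA u == a) * Kp (fun u => cPot u == w).
Definition indep_Y_M : Prop :=
  forall y m,
    Kp (fun u => (cYpot u == y) && (cMpot u == m)) =
    Kp (fun u => cYpot u == y) * Kp (fun u => cMpot u == m).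
End KernelProb.

(* Main.v *)
Set Warnings "-notation-overridden,-ambiguous-paths,-notation-incompatible-prefix".
Require Import Defs.
From HB Require Import structures.
From mathcomp Require Import all_boot all_order all_algebra.
From mathcomp Require Import all_classical all_reals all_analysis.
From mathcomp Require Import measurable_realfun.
From mathcomp Require Import ring lra.
Import Order.TTheory GRing.Theory Num.Theory.
Local Open Scope ring_scope.

Definition good (u : cfgT) : bool :=
  [&& cY u == cYp u (cA u) (cM u), cM u == cMp u (cA u),
      cYp u true false ==> cYp u true true, cYp u false false ==> cYp u true false,
      cYp u false true ==> cYp u true true & cMp u false ==> cMp u true].

Section Alg.
Variable R : realType.
Variable k : cfgT -> R.
Hypothesis k0 : forall u, ~~ good u -> k u = 0.

Lemma Kp_eq (E F : pred cfgT) : (forall u, good u -> E u = F u) -> Kp k E = Kp k F.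
Proof.
move=> EF; rewrite /Kp (bigID good) [in RHS](bigID good) /=.
rewrite [X in _ + X]big1; last by move=> u /andP[_ /k0].
rewrite [X in _ = _ + X]big1; last by move=> u /andP[_ /k0].
by congr (_ + _); apply: eq_bigl => u; case g: (good u); rewrite ?andbT ?andbF ?EF.
Qed.

Lemma Kp_split (E F : pred cfgT) :
  Kp k E = Kp k (fun u => E u && F u) + Kp k (fun u => E u && ~~ F u).
Proof. by rewrite /Kp (bigID F) /=. Qed.

Lemma Kp_part (J : finType) (f : cfgT -> J) (E : pred cfgT) :
  Kp k E = \sum_(j : J) Kp k (fun u => E u && (f u == j)).
Proof. by rewrite /Kp (partition_big f xpredT) //. Qed.

Lemma Kp_indep (J1 J2 : finType) (f : cfgT -> J1) (g : cfgT -> J2) :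
  (forall j1 j2, Kp k (fun u => (f u == j1) && (g u == j2)) =
                 Kp k (fun u => f u == j1) * Kp k (fun u => g u == j2)) ->
  forall (S1 : pred J1) (S2 : pred J2),
  Kp k (fun u => S1 (f u) && S2 (g u)) = Kp k (fun u => S1 (f u)) * Kp k (fun u => S2 (g u)).
Proof.
move=> H S1 S2.
have P1 (S : pred J1) : Kp k (fun u => S (f u)) = \sum_(j | S j) Kp k (fun u => f u == j).
  rewrite (@Kp_part _ f) (bigID S) /= [X in _ + X]big1 ?addr0.
    by apply: eq_bigr => j Sj; apply: eq_bigl => u; case: eqP => [->|_]; rewrite ?Sj ?andbF.
  move=> j /negbTE Sj; rewrite /Kp big1 // => u /andP[+ /eqP E]; by rewrite E Sj ?andbF ?andFb.
have P2 (S : pred J2) : Kp k (fun u => S (g u)) = \sum_(j | S j) Kp k (fun u => g u == j).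
  rewrite (@Kp_part _ g) (bigID S) /= [X in _ + X]big1 ?addr0.
    by apply: eq_bigr => j Sj; apply: eq_bigl => u; case: eqP => [->|_]; rewrite ?Sj ?andbF.
  move=> j /negbTE Sj; rewrite /Kp big1 // => u /andP[+ /eqP E]; by rewrite E Sj ?andbF ?andFb.
rewrite P1 P2 big_distrlr /=.
rewrite (@Kp_part _ f) (bigID S1) /= [X in _ + X]big1 ?addr0; last first.
  move=> j /negbTE Sj; rewrite /Kp big1 // => u /andP[+ /eqP E]; by rewrite E Sj ?andbF ?andFb.
apply: eq_bigr => j1 Sj1.
rewrite (@Kp_part _ g) (bigID S2) /= [X in _ + X]big1 ?addr0; last first.
  move=> j /negbTE Sj; rewrite /Kp big1 // => u /andP[+ /eqP E]; by rewrite E Sj ?andbF ?andFb.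
apply: eq_bigr => j2 Sj2; rewrite -H; apply: eq_bigl => u.
case E1: (f u == j1); case E2: (g u == j2); rewrite ?andbF ?andbT //.
by rewrite (eqP E1) (eqP E2) Sj1 Sj2.
Qed.

Definition qM (mm : bool * bool) (a : bool) : bool := if a then mm.2 else mm.1.
Definition qY (yy : (bool * bool) * (bool * bool)) (a m : bool) : bool :=
  if a then (if m then yy.2.2 else yy.2.1) else (if m then yy.1.2 else yy.1.1).

Ltac goodt := move=> [[[[] []] []] [[[] []] [[[] []] [[] []]]]]; rewrite /good /=; try done.
Ltac goodt2 := move=> [] [] [[[[] []] []] [[[] []] [[[] []] [[] []]]]]; rewrite /good /=; try done.

Hypothesis HA : indep_A_pot k.
Hypothesis HYM : indep_Y_M k.

Lemma Kp_AP (a : bool) (S : pred potT) :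
  Kp k (fun u => (cA u == a) && S (cPot u)) = Kp k (fun u => cA u == a) * Kp k (fun u => S (cPot u)).
Proof.
exact: (@Kp_indep _ _ cA cPot (fun j1 j2 => HA j1 j2) (pred1 a) S).
Qed.

Lemma Kp_YM (SY : pred ((bool * bool) * (bool * bool))) (SM : pred (bool * bool)) :
  Kp k (fun u => SY (cYpot u) && SM (cMpot u)) = Kp k (fun u => SY (cYpot u)) * Kp k (fun u => SM (cMpot u)).
Proof. exact: (@Kp_indep _ _ cYpot cMpot (fun j1 j2 => HYM j1 j2) SY SM). Qed.

Definition yv a m := Kp k (fun u => cYp u a m).
Definition mv a := Kp k (fun u => cMp u a).
Definition pA a := Kp k (fun u => cA u == a).

Lemma den_eq a m : Kp k (fun u => (cA u == a) && (cM u == m)) =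
  pA a * Kp k (fun u => cMp u a == m).
Proof.
rewrite -(Kp_AP a (fun w => qM w.1 a == m)).
apply: Kp_eq; move: a m; goodt2.
Qed.

Lemma num_eq a m : Kp k (fun u => cY u && ((cA u == a) && (cM u == m))) =
  pA a * (yv a m * Kp k (fun u => cMp u a == m)).
Proof.
rewrite /yv -(Kp_YM (fun yy => qY yy a m) (fun mm => qM mm a == m)).
rewrite -(Kp_AP a (fun w => qY w.2 a m && (qM w.1 a == m))).
apply: Kp_eq; move: a m; goodt2.
Qed.

Hypothesis pos : forall a m, 0 < Kp k (fun u => (cA u == a) && (cM u == m)).

Lemma mu_eq a m : mu k a m = yv a m.
Proof.
have := pos a m; rewrite den_eq => H.
by rewrite /mu /Kc num_eq den_eq mulrCA mulfK // gt_eqF.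
Qed.

Lemma pA_ne0 a : pA a != 0.
Proof. by have := pos a true; rewrite den_eq; apply: contraTneq => ->; rewrite mul0r ltxx. Qed.

Lemma mvE a : Kp k (fun u => cMp u a == true) = mv a.
Proof. by rewrite /mv /Kp; apply: eq_bigl => u; rewrite eqb_id. Qed.

Lemma mv_ne0 a : mv a != 0 -> True. Proof. by []. Qed.

Lemma gamma_eq a : gamma k a = mv a.
Proof.
rewrite /gamma /Kc.
have -> : Kp k (fun u => cM u && (cA u == a)) = Kp k (fun u => (cA u == a) && (cM u == true)).
  by apply: eq_bigl => u; rewrite eqb_id andbC.
by rewrite den_eq mvE [pA a * _]mulrC mulfK // pA_ne0.
Qed.

Lemma m1_ne0 : mv true != 0.
Proof. by have := pos true true; rewrite den_eq mvE; apply: contraTneq => ->; rewrite mulr0 ltxx. Qed.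

Lemma diffY a m a' m' : (forall u, good u -> cYp u a' m' -> cYp u a m) ->
  Kp k (fun u => cYp u a m && ~~ cYp u a' m') = yv a m - yv a' m'.
Proof.
move=> H; rewrite /yv (Kp_split (fun u => cYp u a m) (fun u => cYp u a' m')).
rewrite [X in X + _ - _](_ : _ = Kp k (fun u => cYp u a' m')) ; first by rewrite addrAC subrr add0r.
by apply: Kp_eq => u g; apply/idP/idP => [/andP[]//|h]; rewrite h (H u g h).
Qed.

Lemma diffM : Kp k (fun u => cMp u true && ~~ cMp u false) = mv true - mv false.
Proof.
rewrite /mv (Kp_split (fun u => cMp u true) (fun u => cMp u false)).
rewrite [X in X + _ - _](_ : _ = Kp k (fun u => cMp u false)) ; first by rewrite addrAC subrr add0r.
by apply: Kp_eq; goodt.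
Qed.

Lemma cond_eq : Kp k (condE) = yv true true * mv true.
Proof.
rewrite /yv /mv -(Kp_YM (fun yy => qY yy true true) (fun mm => qM mm true)).
by apply: eq_bigl => -[x [[m0 m1] yy]]; rewrite /condE /cYp /cMp /qY /qM /cYpot /cMpot /=; case: m1; rewrite ?andbT ?andbF.
Qed.


Lemma delta_num : Kp k (fun u => ~~ cYp u false (cMp u false) && condE u) =
  (yv true true - yv false true) * mv false +
  (yv true true - yv false false) * (mv true - mv false).
Proof.
rewrite (Kp_split (fun u => ~~ cYp u false (cMp u false) && condE u) (fun u => cMp u false)).
congr (_ + _).
  transitivity (Kp k (fun u => (fun yy => qY yy true true && ~~ qY yy false true) (cYpot u)
                     && (fun mm => qM mm false) (cMpot u))).
    by apply: Kp_eq; goodt.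
  rewrite (Kp_YM (fun yy => qY yy true true && ~~ qY yy false true) (fun mm => qM mm false)).
  rewrite (diffY true true false true); first by [].
  goodt.
transitivity (Kp k (fun u => (fun yy => qY yy true true && ~~ qY yy false false) (cYpot u)
                   && (fun mm => qM mm true && ~~ qM mm false) (cMpot u))).
  by apply: Kp_eq; goodt.
rewrite (Kp_YM (fun yy => qY yy true true && ~~ qY yy false false) (fun mm => qM mm true && ~~ qM mm false)).
rewrite (diffY true true false false); last goodt.
by rewrite diffM.
Qed.

Lemma psi_num : Kp k (fun u => (~~ cYp u true (cMp u false) && ~~ cYp u false (cMp u false)) && condE u) =
  (yv true true - yv true false) * (mv true - mv false).
Proof.
transitivity (Kp k (fun u => (fun yy => qY yy true true && ~~ qY yy true false) (cYpot u)
                   && (fun mm => qM mm true && ~~ qM mm false) (cMpot u))).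
  by apply: Kp_eq; goodt.
rewrite (Kp_YM (fun yy => qY yy true true && ~~ qY yy true false) (fun mm => qM mm true && ~~ qM mm false)).
rewrite (diffY true true true false); last goodt.
by rewrite diffM.
Qed.

Lemma zeta_num : Kp k (fun u => (cYp u true (cMp u false) && ~~ cYp u false (cMp u false)) && condE u) =
  Kp k (fun u => ~~ cYp u false (cMp u false) && condE u) -
  Kp k (fun u => (~~ cYp u true (cMp u false) && ~~ cYp u false (cMp u false)) && condE u).
Proof.
rewrite [in RHS](Kp_split (fun u => ~~ cYp u false (cMp u false) && condE u) (fun u => cYp u true (cMp u false))).
have -> : Kp k (fun u => (~~ cYp u false (cMp u false) && condE u) && ~~ cYp u true (cMp u false)) =
  Kp k (fun u => (~~ cYp u true (cMp u false) && ~~ cYp u false (cMp u false)) && condE u).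
  apply: eq_bigl => u.
  by case: (cYp u true (cMp u false)); case: (cYp u false (cMp u false)); case: (condE u).
rewrite addrK; apply: eq_bigl => u.
by case: (cYp u true (cMp u false)); case: (cYp u false (cMp u false)); case: (condE u).
Qed.

Hypothesis mu11 : 0 < mu k true true.

Lemma alg_main :
     [/\ psi k = (1 - mu k true false / mu k true true) *
                 (1 - gamma k false / gamma k true),
         delta k = (1 - mu k false false / mu k true true) *
                   (1 - gamma k false / gamma k true)
                   + (1 - mu k false true / mu k true true) *
                     (gamma k false / gamma k true) &
         zeta k = delta k - psi k].
Proof.
have y0 : yv true true != 0 by rewrite -mu_eq gt_eqF.
have m0 := m1_ne0.
rewrite !mu_eq !gamma_eq /psi /delta /zeta /Kc cond_eq; split.
- rewrite psi_num; field; by rewrite y0 m0.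
- rewrite delta_num; field; by rewrite y0 m0.
- by rewrite zeta_num mulrBl.
Qed.

End Alg.

Local Open Scope classical_set_scope.

Theorem theorem1 (R : realType)
  (dO : measure_display) (Omega : measurableType dO) (P : probability Omega R)
  (dX : measure_display) (T : measurableType dX)
  (X : Omega -> T) (A M Y : Omega -> bool)
  (Mp : bool -> Omega -> bool) (Yp : bool -> bool -> Omega -> bool)
  (K : T -> cfgT -> R) (eps : R)
  (mX : measurable_fun setT X)
  (mcfg : forall u : cfgT, measurable [set w | mkcfg A M Y Mp Yp w = u])
  (K_ge0 : forall x u, 0 <= K x u)
  (K_sum1 : forall x, \sum_(u : cfgT) K x u = 1)
  (K_meas : forall u, measurable_fun setT (fun x => K x u))
  (K_cond : forall (B : set T) (u : cfgT), measurable B ->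
     P (X @^-1` B `&` [set w | mkcfg A M Y Mp Yp w = u]) =
     (\int[P]_(w in X @^-1` B) (K (X w) u)%:E)%E)
  (A1Y : forall w a m, A w = a -> M w = m -> Y w = Yp a m w)
  (A1M : forall w a, A w = a -> M w = Mp a w)
  (A2 : forall w, [/\ Yp true false w ==> Yp true true w,
                      Yp false false w ==> Yp true false w,
                      Yp false true w ==> Yp true true w &
                      Mp false w ==> Mp true w])
  (A3 : {ae P, forall w, indep_A_pot (K (X w))})
  (A4 : {ae P, forall w, indep_Y_M (K (X w))})
  (eps_gt0 : 0 < eps)
  (A5 : {ae P, forall w, forall a m : bool,
          eps <= Kp (K (X w)) (fun u => (cA u == a) && (cM u == m))})
  (A6 : {ae P, forall w, eps <= mu (K (X w)) true true}) :
  {ae P, forall w,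
     let k := K (X w) in
     [/\ psi k = (1 - mu k true false / mu k true true) *
                 (1 - gamma k false / gamma k true),
         delta k = (1 - mu k false false / mu k true true) *
                   (1 - gamma k false / gamma k true)
                   + (1 - mu k false true / mu k true true) *
                     (gamma k false / gamma k true) &
         zeta k = delta k - psi k]}.
Proof.
have good_mk w : good (mkcfg A M Y Mp Yp w).
  have hY := A1Y w (A w) (M w) erefl erefl.
  have hM := A1M w (A w) erefl.
  have [h1 h2 h3 h4] := A2 w.
  rewrite /good /mkcfg /cY /cA /cM /cYp /cMp /= h1 h2 h3 h4 !andbT hY.
  move: hM; case: (A w); case: (M w) => hM /=; by rewrite -hM !eqxx.
have bad0 u : ~~ good u -> {ae P, forall w, K (X w) u = 0}.
  move=> gu.
  have mf : measurable_fun [set: Omega] (EFin \o (fun w => K (X w) u)).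
    by apply/measurable_EFinP; apply: measurableT_comp (K_meas u) mX.
  have := K_cond setT u measurableT.
  have -> : [set w | mkcfg A M Y Mp Yp w = u] = set0.
    apply/seteqP; split => w //= Ew; by move: gu; rewrite -Ew good_mk.
  rewrite setI0 measure0 preimage_setT => /esym H0.
  have : (\int[P]_(x in setT) `|(K (X x) u)%:E| = 0)%E.
    by rewrite -H0; apply: eq_integral => x _; rewrite gee0_abs // lee_fin.
  move/(ae_eq_integral_abs P measurableT mf).
  by apply: filterS => w /(_ I) [].
have Hg : forall s : seq cfgT, {ae P, forall w, forall u, u \in s -> ~~ good u -> K (X w) u = 0}.
  elim => [|u s IH].
    by apply: nearW => w u.
  case gu: (good u).
    by apply: filterS IH => w H v; rewrite in_cons => /orP[/eqP -> | /H]; rewrite ?gu.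
  apply: filterS2 IH (bad0 u (negbT gu)) => w H Hu v.
  by rewrite in_cons => /orP[/eqP -> | /H].
have HG := Hg (index_enum (bool * bool * bool * potT)%type).
near=> w.
have h3 : indep_A_pot (K (X w)) by near: w.
have h4 : indep_Y_M (K (X w)) by near: w.
have h5 : forall a m : bool, eps <= Kp (K (X w)) (fun u => (cA u == a) && (cM u == m)) by near: w.
have h6 : eps <= mu (K (X w)) true true by near: w.
have hg : forall u : cfgT, u \in index_enum (bool * bool * bool * potT)%type -> ~~ good u -> K (X w) u = 0 by near: w.
apply: alg_main => //.
- by move=> u; apply: hg; rewrite mem_index_enum.
- by move=> a m; apply: lt_le_trans eps_gt0 (h5 a m).
- exact: lt_le_trans eps_gt0 h6.
Unshelve. all: by end_near.
Qed.
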